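(* Let $p\in\mathbf{R}_+^n$, $K=(K_1,\dots,K_n)\in\mathbf{R}_{++}^n$, $w\in\mathbf{R}_{++}^n$ and $K_0>0$. Consider \[ p^{\inf}=\inf\Big\{\mathbf{E}_{\pi}(w^{T}x-K_0)_+ \;:\; \pi \mbox{ a probability measure on }\mathbf{R}_+^n,\ \mathbf{E}_{\pi}(x_i-K_i)_+=p_i,\ i=1,\dots,n\Big\}. \] Then \[ p^{\inf}=\inf_{\nu}\Big\{\sum_{i=1}^n\big(p_iw_i-\nu_i(K_0-w_iK_i)_+\big)_+ \;:\; \nu\in\mathbf{R}^n,\ \nu\ge 0,\ \textstyle\sum_i\nu_i=1\Big\}, \] and this value equals \[ \sum_{\{i:\,K_iw_i\ge K_0\}}p_iw_i+\max_{\{j:\,K_jw_j<K_0\}}\Big(\sum_{\{i:\,K_iw_i<K_0\}}p_iw_i\min\Big(1,\frac{K_0-K_jw_j}{K_0-K_iw_i}\Big)-K_0+w_jK_j\Big)_+ , \] where the maximum over an empty index set is taken to be $0$. Moreover, the infimum $p^{\inf}$ is attained or approached by a sequence of discrete probability measures satisfying the constraints.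
   Context: $(y)_+=\max(y,0)$. $\mathbf{R}_{++}^n$ denotes vectors with strictly positive components. *)

(* Defs.v *)
From HB Require Import structures.
From mathcomp Require Import all_boot all_order all_algebra.
From mathcomp Require Import all_classical all_reals all_analysis.
Set Implicit Arguments. Unset Strict Implicit. Unset Printing Implicit Defensive.
Import Order.TTheory GRing.Theory Num.Theory.
Local Open Scope classical_set_scope.
Local Open Scope ring_scope.

Definition pos_part (R : realType) (y : R) : R := Num.max y 0.

(* A probability measure on R_+^n is represented
   as the law of a random vector X = (X_1,...,X_n) (measurable, nonnegative
   coordinates) on an arbitrary probability space. *)
Definition feasible_values (R : realType) (n : nat) (p K w : 'I_n -> R) (K0 : R)
  : set (\bar R) :=
  [set v | exists (d : measure_display) (T : measurableType d)
             (P : probability T R) (X : 'I_n -> T -> R),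
      (forall i, measurable_fun setT (X i)) /\
      (forall i t, 0 <= X i t) /\
      (forall i, (\int[P]_t (pos_part (X i t - K i))%:E = (p i)%:E)%E) /\
      v = (\int[P]_t (pos_part (\sum_(i < n) w i * X i t - K0))%:E)%E].

Definition pinf (R : realType) (n : nat) (p K w : 'I_n -> R) (K0 : R) : \bar R :=
  ereal_inf (feasible_values p K w K0).

Definition simplex (R : realType) (n : nat) : set ('I_n -> R) :=
  [set nu | (forall i, 0 <= nu i) /\ \sum_(i < n) nu i = 1].

Definition dual_inf (R : realType) (n : nat) (p K w : 'I_n -> R) (K0 : R) : R :=
  inf [set \sum_(i < n) pos_part (p i * w i - nu i * pos_part (K0 - w i * K i))
      | nu in @simplex R n].

(* Explicit formula; the max over an empty index set is 0 (all terms are >= 0). *)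
Definition explicit_value (R : realType) (n : nat) (p K w : 'I_n -> R) (K0 : R) : R :=
  \sum_(i < n | K0 <= K i * w i) p i * w i +
  \big[Num.max/0]_(j < n | K j * w j < K0)
     pos_part (\sum_(i < n | K i * w i < K0)
                 p i * w i * Num.min 1 ((K0 - K j * w j) / (K0 - K i * w i))
               - K0 + w j * K j).

(* Finitely supported (discrete) probability measures on R^n:
   sum_k dm_wt k * delta_{dm_pt k}. *)
Record dmeasure (R : realType) (n : nat) := DMeasure {
  dm_size : nat;
  dm_wt : 'I_dm_size -> R;
  dm_pt : 'I_dm_size -> 'I_n -> R }.

Arguments dm_size {R n}.
Arguments dm_wt {R n}.
Arguments dm_pt {R n}.

Definition dm_feasible (R : realType) (n : nat) (p K : 'I_n -> R) (m : dmeasure R n) : Prop :=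
  (forall k, 0 <= dm_wt m k) /\ \sum_(k < dm_size m) dm_wt m k = 1 /\
  (forall k i, 0 <= dm_pt m k i) /\
  (forall i, \sum_(k < dm_size m) dm_wt m k * pos_part (dm_pt m k i - K i) = p i).

Definition dm_value (R : realType) (n : nat) (w : 'I_n -> R) (K0 : R) (m : dmeasure R n) : R :=
  \sum_(k < dm_size m) dm_wt m k * pos_part (\sum_(i < n) w i * dm_pt m k i - K0).

(* Main.v *)
Require Import Defs.
From HB Require Import structures.
From mathcomp Require Import all_boot all_order all_algebra.
From mathcomp Require Import all_classical all_reals all_analysis.
From mathcomp Require Import measurable_realfun.
From mathcomp Require Import ring lra.
Set Implicit Arguments. Unset Strict Implicit. Unset Printing Implicit Defensive.
Import Order.TTheory GRing.Theory Num.Theory.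
Import numFieldTopology.Exports numFieldNormedType.Exports.
Local Open Scope classical_set_scope.
Local Open Scope ring_scope.
Lemma pp_ge0 (R : realType) (y : R) : 0 <= pos_part y.
Proof. by rewrite /pos_part le_max lexx orbT. Qed.
Lemma pp_ge (R : realType) (y : R) : y <= pos_part y.
Proof. by rewrite /pos_part le_max lexx. Qed.
Lemma pp_id (R : realType) (y : R) : 0 <= y -> pos_part y = y.
Proof. by move=> h; rewrite /pos_part max_l. Qed.
Lemma pp_neg (R : realType) (y : R) : y <= 0 -> pos_part y = 0.
Proof. by move=> h; rewrite /pos_part max_r. Qed.
Lemma pp_least (R : realType) (y z : R) : y <= z -> 0 <= z -> pos_part y <= z.
Proof. by move=> h1 h2; rewrite /pos_part ge_max h1 h2. Qed.
Lemma pp_le (R : realType) (y z : R) : y <= z -> pos_part y <= pos_part z.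
Proof. move=> h; apply: pp_least; last exact: pp_ge0.
by apply: le_trans h _; apply: pp_ge. Qed.
Lemma pp_scale (R : realType) (m y : R) : 0 <= m <= 1 -> m * y <= pos_part y.
Proof.
move=> /andP[m0 m1]; case: (lerP 0 y) => hy.
  rewrite pp_id //; have h : 0 <= (1 - m) * y by apply: mulr_ge0; lra.
  by rewrite mulrBl mul1r subr_ge0 in h.
rewrite (pp_neg (ltW hy)); have h : 0 <= m * (- y) by apply: mulr_ge0; lra.
move: h; rewrite mulrN oppr_ge0 => h. exact: h.
Qed.
Lemma pp_lip (R : realType) (y z : R) : `|pos_part y - pos_part z| <= `|y - z|.
Proof.
case: (lerP 0 y) => hy; case: (lerP 0 z) => hz.
- by rewrite !pp_id.
- rewrite (pp_id hy) (pp_neg (ltW hz)) subr0 ger0_norm //.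
  apply: le_trans _ (ler_norm _); lra.
- rewrite (pp_id hz) (pp_neg (ltW hy)) sub0r normrN ger0_norm // distrC.
  apply: le_trans _ (ler_norm _); lra.
- by rewrite (pp_neg (ltW hz)) (pp_neg (ltW hy)) subrr normr0.
Qed.

Definition dual_obj (R : realType) (n : nat) (p K w : 'I_n -> R) (K0 : R) (nu : 'I_n -> R) : R :=
  \sum_(i < n) pos_part (p i * w i - nu i * pos_part (K0 - w i * K i)).

Lemma sum_sub_le (R : realType) (n : nat) (P : pred 'I_n) (f : 'I_n -> R) :
  (forall i, 0 <= f i) -> \sum_(i < n | P i) f i <= \sum_(i < n) f i.
Proof.
move=> h; rewrite big_mkcond /=; apply: ler_sum => i _.
by case: (P i) => //.
Qed.

Lemma Sterm (R : realType) (n : nat) (p K w : 'I_n -> R) (K0 : R) (nu : 'I_n -> R) i :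
  0 <= p i -> 0 < w i -> K0 <= K i * w i ->
  pos_part (p i * w i - nu i * pos_part (K0 - w i * K i)) = p i * w i.
Proof.
move=> hp hw hK; rewrite (@pp_neg _ (K0 - w i * K i)); last by rewrite mulrC; lra.
by rewrite mulr0 subr0 pp_id // mulr_ge0 // ltW.
Qed.

Lemma dual_ge_explicit (R : realType) (n : nat) (p K w : 'I_n -> R) (K0 : R) (nu : 'I_n -> R) :
  (forall i, 0 <= p i) -> (forall i, 0 < K i) -> (forall i, 0 < w i) -> 0 < K0 ->
  simplex nu -> explicit_value p K w K0 <= dual_obj p K w K0 nu.
Proof.
move=> hp hK hw hK0 [hnu0 hnu1].
rewrite /dual_obj (bigID (fun i => K0 <= K i * w i)) /= /explicit_value.
apply: lerD.
  by rewrite le_eqVlt; apply/orP; left; apply/eqP; apply: eq_bigr => i hi; rewrite Sterm.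
rewrite (eq_bigl (fun i => K i * w i < K0)); last by move=> i; rewrite ltNge.
have X0 : 0 <= \sum_(i < n | K i * w i < K0)
     pos_part (p i * w i - nu i * pos_part (K0 - w i * K i)).
  by apply: sumr_ge0 => i _; exact: pp_ge0.
apply: bigmax_le => // j hj; apply: pp_least => //.
set cj := K0 - K j * w j.
have cj0 : 0 < cj by rewrite /cj; lra.
have step : forall i, K i * w i < K0 ->
   p i * w i * Num.min 1 (cj / (K0 - K i * w i)) - nu i * cj <=
   pos_part (p i * w i - nu i * pos_part (K0 - w i * K i)).
  move=> i hi.
  set ci := K0 - K i * w i.
  have ci0 : 0 < ci by rewrite /ci; lra.
  rewrite (@pp_id _ (K0 - w i * K i)); last by rewrite mulrC; lra.
  rewrite (mulrC (w i) (K i)) -/ci.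
  set m := Num.min 1 (cj / ci).
  have m1 : m <= 1 by rewrite /m ge_min lexx.
  have m0 : 0 <= m by rewrite /m le_min ler01 /= divr_ge0 // ltW.
  have mc : m * ci <= cj.
    by rewrite -ler_pdivlMr // /m ge_min lexx orbT.
  have hs := @pp_scale _ m (p i * w i - nu i * ci).
  have h1 : m * (p i * w i - nu i * ci) <= pos_part (p i * w i - nu i * ci) by apply: hs; rewrite m0 m1.
  have h2 : 0 <= nu i * (cj - m * ci) by apply: mulr_ge0 => //; lra.
  nra.
apply: le_trans (ler_sum _ step).
rewrite sumrB -mulr_suml.
have hS : \sum_(i < n | K i * w i < K0) nu i <= 1.
  by rewrite -hnu1; apply: sum_sub_le.
have h3 : 0 <= (1 - \sum_(i < n | K i * w i < K0) nu i) * cj by apply: mulr_ge0; lra.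
rewrite /cj in h3 *; rewrite mulrC (mulrC (w j)); nra.
Qed.

Lemma sum_pred_le (R : realType) (n : nat) (P Q : pred 'I_n) (f : 'I_n -> R) :
  (forall i, 0 <= f i) -> (forall i, P i -> Q i) ->
  \sum_(i < n | P i) f i <= \sum_(i < n | Q i) f i.
Proof.
move=> h hPQ; rewrite (big_mkcond P) (big_mkcond Q) /=; apply: ler_sum => i _.
case hP: (P i); first by rewrite (hPQ _ hP).
by case: (Q i).
Qed.



Lemma exists_of_sum_pos (R : realType) (n : nat) (P : pred 'I_n) (f : 'I_n -> R) :
  0 < \sum_(i < n | P i) f i -> exists i, P i.
Proof.
case: (pickP P) => [i Pi|hn] h; first by exists i.
by move: h; rewrite big_pred0 // ltxx.
Qed.

Lemma threshold (R : realType) (n : nat) (L : pred 'I_n) (c r : 'I_n -> R) :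
  (forall i, 0 <= r i) -> 1 < \sum_(i < n | L i) r i ->
  exists2 j, L j & (\sum_(i < n | L i && (c j < c i)) r i <= 1) &&
                   (1 <= \sum_(i < n | L i && (c j <= c i)) r i).
Proof.
move=> hr hS.
have [i0 Li0] : exists i, L i by apply: (exists_of_sum_pos (f := r)); apply: lt_trans hS.
case: (@arg_minP _ _ _ i0 L c Li0) => jm Ljm hmin.
pose J := fun i => L i && (1 <= \sum_(k < n | L k && (c i <= c k)) r k).
have Jjm : J jm.
  rewrite /J Ljm /=; apply: ltW; apply: lt_le_trans hS _.
  by apply: sum_pred_le => // i Li; rewrite Li hmin.
case: (@arg_maxP _ _ _ jm J c Jjm) => jx /andP[Ljx Vjx] hmax.
exists jx => //; rewrite Vjx andbT leNgt; apply/negP => hU.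
have [k /andP[Lk ck]] : exists k, L k && (c jx < c k).
  by apply: (exists_of_sum_pos (f := r)); apply: lt_trans hU.
case: (@arg_minP _ _ _ k (fun i => L i && (c jx < c i)) c (introT andP (conj Lk ck))) => km /andP[Lkm ckm] hkm.
have Jkm : J km.
  rewrite /J Lkm /=; apply: ltW; apply: lt_le_trans hU _.
  apply: sum_pred_le => // i /andP[Li ci]; rewrite Li /=.
  by apply: hkm; rewrite Li ci.
have /= h := hmax km Jkm; by move: ckm; rewrite ltNge h.
Qed.

Lemma term_bound (R : realType) (a ci t th : R) : 0 <= a -> 0 < ci -> 0 < t -> 0 <= th <= 1 ->
  pos_part (a - (if t < ci then a / ci else if ci == t then th * (a / ci) else 0) * ci)
   <= a * Num.min 1 (t / ci) - t * (if t < ci then a / ci else if ci == t then th * (a / ci) else 0).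
Proof.
move=> ha hci ht /andP[th0 th1].
have ci0 : ci != 0 by rewrite gt_eqF.
case: (ltgtP t ci) => h.
- rewrite divfK // subrr (pp_neg (lexx 0)).
  have -> : Num.min 1 (t / ci) = t / ci.
    by apply: min_r; rewrite ler_pdivrMr // mul1r ltW.
  by rewrite mulrCA subrr.
- have -> : Num.min 1 (t / ci) = 1.
    by apply: min_l; rewrite ler_pdivlMr // mul1r ltW.
  by rewrite mul0r subr0 mulr0 subr0 mulr1 pp_id.
- rewrite h mulfV // (@min_l _ _ 1 1) // mulr1.
  rewrite -mulrA divfK // [ci * _]mulrC -mulrA divfK //.
  apply: pp_least => //; nra.
Qed.

Definition Hobj (R : realType) (n : nat) (p K w : 'I_n -> R) (K0 : R) (nu : 'I_n -> R) : R :=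
  \sum_(i < n) pos_part (p i * w i - nu i * (K0 - w i * K i)).

Lemma H_split (R : realType) (n : nat) (p K w : 'I_n -> R) (K0 : R) (nu : 'I_n -> R) :
  (forall i, 0 <= p i) -> (forall i, 0 < w i) ->
  (forall i, K0 <= K i * w i -> nu i = 0) ->
  Hobj p K w K0 nu = \sum_(i < n | K0 <= K i * w i) p i * w i +
     \sum_(i < n | K i * w i < K0) pos_part (p i * w i - nu i * (K0 - K i * w i)).
Proof.
move=> hp hw hnu; rewrite /Hobj (bigID (fun i => K0 <= K i * w i)) /=; congr (_ + _).
  apply: eq_bigr => i hi; rewrite hnu // mul0r subr0 pp_id //.
  by apply: mulr_ge0 => //; apply: ltW.
rewrite (eq_bigl (fun i => K i * w i < K0)); last by move=> i; rewrite ltNge.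
by apply: eq_bigr => i _; rewrite (mulrC (w i)).
Qed.

Lemma primal_nu (R : realType) (n : nat) (p K w : 'I_n -> R) (K0 : R) :
  (forall i, 0 <= p i) -> (forall i, 0 < K i) -> (forall i, 0 < w i) -> 0 < K0 ->
  exists nu : 'I_n -> R, [/\ (forall i, 0 <= nu i), (forall i, K0 <= K i * w i -> nu i = 0),
     \sum_(i < n) nu i <= 1 & Hobj p K w K0 nu <= explicit_value p K w K0].
Proof.
move=> hp hK hw hK0.
pose L := fun i => K i * w i < K0.
pose a := fun i => p i * w i.
pose c := fun i => K0 - K i * w i.
pose r := fun i => a i / c i.
have hc : forall i, L i -> 0 < c i by move=> i; rewrite /L /c => h; lra.
have ha : forall i, 0 <= a i by move=> i; rewrite /a mulr_ge0 // ltW.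
have hr : forall i, 0 <= (if L i then r i else 0).
  by move=> i; case hL: (L i) => //; rewrite /r divr_ge0 // ltW // hc.
case: (lerP (\sum_(i < n | L i) r i) 1) => hS.
  exists (fun i => if L i then r i else 0); split => //.
  - by move=> i hi; rewrite /L ltNge hi.
  - by rewrite -big_mkcond.
  rewrite H_split //; last by move=> i hi; rewrite /L ltNge hi.
  rewrite /explicit_value; apply: lerD => //.
  apply: le_trans (bigmax_ge_id _ _ _ _); rewrite le_eqVlt; apply/orP; left; apply/eqP.
  apply: big1 => i hi; have -> : L i = true by exact: hi.
  have := hc i hi; rewrite /c /r /a => hci.
  by rewrite divfK ?subrr ?pp_id // gt_eqF.
pose r' := fun i => if L i then r i else 0.
have hS' : 1 < \sum_(i < n | L i) r' i.
  by rewrite (eq_bigr r) // => i hi; rewrite /r' hi.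
have [j Lj /andP[hU hV]] := threshold c hr hS'.
pose t := c j.
have ht : 0 < t by apply: hc.
pose U := \sum_(i < n | L i && (t < c i)) r i.
pose W := \sum_(i < n | L i && (c i == t)) r i.
have hrL : forall i, L i -> 0 <= r i.
  by move=> i hi; have := hr i; rewrite hi.
have eU : \sum_(i < n | L i && (c j < c i)) r' i = U.
  by apply: eq_bigr => i /andP[hi _]; rewrite /r' hi.
have hVUW : \sum_(i < n | L i && (c j <= c i)) r' i = U + W.
  rewrite (bigID (fun i => t < c i)) /=; congr (_ + _).
    rewrite -eU; apply: eq_big => i; last by move=> /andP[/andP[hi _] _]; rewrite /r' hi.
    by rewrite /t; case: (L i) => //=; case: ltgtP.
  apply: eq_big => i; last by move=> /andP[/andP[hi _] _]; rewrite /r' hi.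
  by rewrite /t; case: (L i) => //=; case: ltgtP.
rewrite eU in hU; rewrite hVUW in hV.
have W0 : 0 <= W by apply: sumr_ge0 => i /andP[hi _]; apply: hrL.
pose th := (1 - U) / W.
have th0 : 0 <= th by apply: divr_ge0 => //; lra.
have th1 : th <= 1.
  case: (eqVneq W 0) => hW; first by rewrite /th hW invr0 mulr0 ler01.
  by rewrite /th ler_pdivrMr ?mul1r ?lt_neqAle 1?eq_sym ?hW //; lra.
have hUW : U + th * W = 1.
  case: (eqVneq W 0) => hW.
    by rewrite /th hW invr0 !mulr0 addr0; move: hU hV; rewrite hW; lra.
  by rewrite /th divfK // addrC subrK.
pose nu := fun i => if L i then
   (if t < c i then a i / c i else if c i == t then th * (a i / c i) else 0) else 0.
have hsum : \sum_(i < n) nu i = U + th * W.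
  rewrite /U /W (big_mkcond (fun i => L i && (t < c i))) (big_mkcond (fun i => L i && (c i == t))).
  rewrite mulr_sumr -big_split /=; apply: eq_bigr => i _.
  rewrite /nu /r; case: (L i) => /=; last by rewrite mulr0 addr0.
  by case: ltgtP => //=; rewrite ?mulr0 ?addr0 ?add0r.
have hsumL : \sum_(i < n | L i) nu i = \sum_(i < n) nu i.
  rewrite big_mkcond /=; apply: eq_bigr => i _; rewrite /nu.
  by case: (L i).
exists nu; split.
- move=> i; rewrite /nu; case hi: (L i) => //.
  have h2 := hc i hi; have h1 := ha i.
  have hac : 0 <= a i / c i by rewrite divr_ge0 // ltW.
  by case: ltgtP => // _; exact: mulr_ge0.
- by move=> i hi; rewrite /nu /L ltNge hi.
- by rewrite hsum hUW.
rewrite H_split //; last by move=> i hi; rewrite /nu /L ltNge hi.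
rewrite /explicit_value; apply: lerD => //.
apply: le_trans (le_bigmax_cond _ _ Lj); apply: le_trans (pp_ge _).
have step : forall i, L i ->
  pos_part (p i * w i - nu i * (K0 - K i * w i)) <=
  p i * w i * Num.min 1 ((K0 - K j * w j) / (K0 - K i * w i)) - t * nu i.
  move=> i hi; rewrite /nu hi; have := term_bound (ha i) (hc i hi) ht (introT andP (conj th0 th1)).
  by rewrite /a /c /t.
apply: le_trans (ler_sum _ step) _.
rewrite sumrB -mulr_sumr hsumL hsum hUW mulr1 /t /c.
rewrite (mulrC (w j)); lra.
Qed.

Lemma dual_eq (R : realType) (n : nat) (p K w : 'I_n -> R) (K0 : R) :
  (forall i, 0 <= p i) -> (forall i, 0 < K i) -> (forall i, 0 < w i) -> 0 < K0 ->
  dual_inf p K w K0 = explicit_value p K w K0.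
Proof.
move=> hp hK hw hK0.
case: n p K w hp hK hw => [|n] p K w hp hK hw.
  rewrite /dual_inf /explicit_value !big_ord0 add0r.
  rewrite (_ : [set _ | nu in _] = set0) ?inf0 //.
  apply/seteqP; split => // x [nu [_ hs] _]; move: hs; rewrite big_ord0 => /eqP.
  by rewrite eq_sym oner_eq0.
have [nu [hnu0 hnuS hnu1 hH]] := primal_nu hp hK hw hK0.
pose d := (1 - \sum_(i < n.+1) nu i) / n.+1%:R.
have d0 : 0 <= d by rewrite divr_ge0 // subr_ge0.
pose nu' := fun i => nu i + d.
have hs : simplex nu'.
  split; first by move=> i; rewrite /nu' addr_ge0.
  rewrite big_split /= sumr_const card_ord -(mulr_natr d) /d divfK ?pnatr_eq0 //.
  by rewrite addrC subrK.
have hle : dual_obj p K w K0 nu' <= explicit_value p K w K0.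
  apply: le_trans hH; rewrite /dual_obj /Hobj; apply: ler_sum => i _.
  case: (lerP K0 (K i * w i)) => hi.
    rewrite /nu' hnuS // add0r (@pp_neg _ (K0 - w i * K i)); last by rewrite mulrC; lra.
    by rewrite mulr0 mul0r.
  rewrite (@pp_id _ (K0 - w i * K i)); last by rewrite mulrC; lra.
  apply: pp_le; rewrite /nu' mulrDl.
  have : 0 <= d * (K0 - w i * K i) by apply: mulr_ge0 => //; rewrite mulrC; lra.
  lra.
apply/eqP; rewrite eq_le; apply/andP; split.
  apply: le_trans hle; rewrite /dual_inf.
  apply: ge_inf; last by exists nu'.
  exists 0 => _ [mu _ <-]; apply: sumr_ge0 => i _; exact: pp_ge0.
apply: lb_le_inf; first by exists (dual_obj p K w K0 nu'), nu'.
by move=> _ [mu hmu <-]; exact: dual_ge_explicit.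
Qed.

Lemma sum_wpp_le (R : realType) (n : nat) (K w x : 'I_n -> R) (k : 'I_n) :
  (forall i, 0 <= x i) -> (forall i, 0 < K i) -> (forall i, 0 < w i) -> K k <= x k ->
  \sum_(i < n) w i * pos_part (x i - K i) <= \sum_(i < n) w i * x i - w k * K k.
Proof.
move=> hx hK hw hk.
rewrite (bigD1 k) //= [X in _ <= X - _](bigD1 k) //= pp_id ?subr_ge0 //.
have : \sum_(i < n | i != k) w i * pos_part (x i - K i) <= \sum_(i < n | i != k) w i * x i.
  apply: ler_sum => i _; apply: ler_wpM2l; first exact: ltW.
  by apply: pp_least => //; have := hK i; lra.
rewrite mulrBr; lra.
Qed.

Lemma pointwise (R : realType) (n : nat) (K w x m : 'I_n -> R) (K0 t : R) :
  (forall i, 0 <= x i) -> (forall i, 0 < K i) -> (forall i, 0 < w i) -> 0 <= t ->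
  (forall i, 0 <= m i <= 1) -> (forall i, K i * w i < K0 -> m i * (K0 - K i * w i) <= t) ->
  \sum_(i < n) (if K0 <= K i * w i then w i else w i * m i) * pos_part (x i - K i)
    <= pos_part (\sum_(i < n) w i * x i - K0) + t.
Proof.
move=> hx hK hw ht hm hmc.
have lam_le : forall i, (if K0 <= K i * w i then w i else w i * m i) <= w i.
  move=> i; case: ifP => // _; have := hm i => /andP[_ h1].
  by rewrite -{2}(mulr1 (w i)) ler_wpM2l // ltW.
have lam_ge : forall i, 0 <= (if K0 <= K i * w i then w i else w i * m i).
  move=> i; case: ifP => _; first exact: ltW.
  by have := hm i => /andP[h0 _]; rewrite mulr_ge0 // ltW.
case: (pickP (fun s => (K0 <= K s * w s) && (K s < x s))) => [s /andP[hs hxs]|hnone].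
  have h1 : \sum_(i < n) (if K0 <= K i * w i then w i else w i * m i) * pos_part (x i - K i)
         <= \sum_(i < n) w i * pos_part (x i - K i).
    by apply: ler_sum => i _; apply: ler_wpM2r; [exact: pp_ge0|exact: lam_le].
  have h2 := sum_wpp_le hx hK hw (ltW hxs).
  have h3 := pp_ge (\sum_(i < n) w i * x i - K0).
  rewrite (mulrC (w s)) in h2; lra.
case: (pickP (fun s => (K s * w s < K0) && (K s < x s))) => [k0 hk0|hnone2]; last first.
  rewrite big1; first by apply: addr_ge0 => //; exact: pp_ge0.
  move=> i _; have := hnone i; have := hnone2 i.
  case: (lerP K0 (K i * w i)) => /= hi; case: (ltP (K i) (x i)) => //= hxi _ _.
    by rewrite pp_neg ?mulr0 // subr_le0.
  by rewrite pp_neg ?mulr0 // subr_le0.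
case: (@arg_maxP _ _ _ k0 (fun s => (K s * w s < K0) && (K s < x s)) m hk0) => k /andP[hk hxk] hmax.
have [mk0 mk1] : 0 <= m k /\ m k <= 1 by have := hm k => /andP[].
have h1 : \sum_(i < n) (if K0 <= K i * w i then w i else w i * m i) * pos_part (x i - K i)
       <= m k * \sum_(i < n) w i * pos_part (x i - K i).
  rewrite mulr_sumr; apply: ler_sum => i _.
  case: (lerP K0 (K i * w i)) => hi.
    have := hnone i; rewrite hi /= => /negbT; rewrite -leNgt => hxi.
    rewrite pp_neg ?subr_le0 // !mulr0; exact: lexx.
  case: (ltP (K i) (x i)) => hxi.
    have hmi := hmax i (introT andP (conj hi hxi)).
    have hpp := pp_ge0 (x i - K i); have hwi := ltW (hw i).
    have hwm : w i * m i <= w i * m k by apply: ler_wpM2l.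
    by rewrite mulrCA mulrA; apply: ler_wpM2r.
  by rewrite pp_neg ?subr_le0 // !mulr0.
have h2 := sum_wpp_le hx hK hw (ltW hxk).
have h3 := pp_scale (\sum_(i < n) w i * x i - K0) (introT andP (conj mk0 mk1)).
have h4 := hmc k hk.
have h5 : m k * (\sum_(i < n) w i * pos_part (x i - K i)) <= m k * (\sum_(i < n) w i * x i - w k * K k).
  by apply: ler_wpM2l.
rewrite (mulrC (w k)) in h5; nra.
Qed.

Lemma meas_pp (d : measure_display) (T : measurableType d) (R : realType) (h : T -> R) (c : R) :
  measurable_fun setT h -> measurable_fun setT (fun t => pos_part (h t - c)).
Proof.
move=> mh; apply: (@measurable_maxr _ _ _ _ (fun t => h t - c) (cst 0)).
  by apply: measurable_funB => //; exact: measurable_cst.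
exact: measurable_cst.
Qed.

Lemma key_integral (R : realType) (n : nat) (p K w : 'I_n -> R) (K0 : R)
  (d : measure_display) (T : measurableType d) (P : probability T R) (X : 'I_n -> T -> R)
  (m : 'I_n -> R) (t : R) :
  (forall i, 0 < K i) -> (forall i, 0 < w i) ->
  (forall i, measurable_fun setT (X i)) -> (forall i x, 0 <= X i x) ->
  (forall i, (\int[P]_x (pos_part (X i x - K i))%:E = (p i)%:E)%E) ->
  0 <= t -> (forall i, 0 <= m i <= 1) ->
  (forall i, K i * w i < K0 -> m i * (K0 - K i * w i) <= t) ->
  ((\sum_(i < n) (if K0 <= K i * w i then w i else w i * m i) * p i)%:E <=
   \int[P]_x (pos_part (\sum_(i < n) w i * X i x - K0))%:E + t%:E)%E.
Proof.
move=> hK hw mX hX hint ht hm hmc.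
pose lam := fun i => if K0 <= K i * w i then w i else w i * m i.
have lam_ge : forall i, 0 <= lam i.
  move=> i; rewrite /lam; case: ifP => _; first exact: ltW.
  by have := hm i => /andP[h0 _]; rewrite mulr_ge0 // ltW.
have mf : forall i, measurable_fun setT (fun x => pos_part (X i x - K i)) by move=> i; apply: meas_pp.
have mg : measurable_fun setT (fun x => pos_part (\sum_(i < n) w i * X i x - K0)).
  apply: meas_pp; apply: measurable_sum => i.
  by apply: measurable_funM => //; exact: measurable_cst.
have -> : ((\sum_(i < n) lam i * p i)%:E =
   \int[P]_x (\sum_(i < n) (lam i * pos_part (X i x - K i))%:E))%E.
  rewrite ge0_integral_sum //; last first.
    by move=> i x _; rewrite lee_fin mulr_ge0 // pp_ge0.
    by move=> i; apply/measurable_EFinP; apply: measurable_funM => //; exact: measurable_cst.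
  rewrite -sumEFin; apply: eq_bigr => i _.
  rewrite EFinM -hint -ge0_integralZl //.
  - exact/measurable_EFinP.
  - by move=> x _; rewrite lee_fin pp_ge0.
  - by rewrite lee_fin.
have et : (t%:E = \int[P]_x (cst t%:E x))%E.
  rewrite integral_cst // -[X in X = _]mule1; congr (_ * _)%E.
  by apply/esym; exact: probability_setT.
rewrite et.
rewrite -ge0_integralD //; last first.
  exact/measurable_EFinP.
  by move=> x _; rewrite lee_fin pp_ge0.
apply: ge0_le_integral => //.
- by move=> x _; rewrite sumEFin lee_fin; apply: sumr_ge0 => i _; rewrite mulr_ge0 // pp_ge0.
- by apply: emeasurable_sum => i; apply/measurable_EFinP; apply: measurable_funM => //; exact: measurable_cst.
- apply: emeasurable_funD; first exact/measurable_EFinP.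
  exact: measurable_cst.
move=> x _; rewrite sumEFin /= -EFinD lee_fin.
exact: pointwise.
Qed.

Lemma feasible_ge (R : realType) (n : nat) (p K w : 'I_n -> R) (K0 : R) (v : \bar R) :
  (forall i, 0 <= p i) -> (forall i, 0 < K i) -> (forall i, 0 < w i) -> 0 < K0 ->
  feasible_values p K w K0 v -> ((explicit_value p K w K0)%:E <= v)%E.
Proof.
move=> hp hK hw hK0 [d [T [P [X [mX [hX [hint ->]]]]]]].
set V := (\int[P]_x _)%E.
have V0 : (0 <= V)%E by apply: integral_ge0 => x _; rewrite lee_fin pp_ge0.
have hm0 : forall i : 'I_n, 0 <= (fun _ => 0 : R) i <= 1 by move=> i; rewrite lexx ler01.
have hmc0 : forall i : 'I_n, K i * w i < K0 -> (fun _ => 0 : R) i * (K0 - K i * w i) <= 0.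
  by move=> i _; rewrite mul0r.
have k0 := @key_integral R n p K w K0 d T P X (fun _ => 0) 0 hK hw mX hX hint (lexx 0) hm0 hmc0.
have [Vinf|Vfin] := eqVneq V +oo%E; first by rewrite Vinf leey.
have Ve : V = (fine V)%:E by rewrite fineK // ge0_fin_numE // ltey.
set r := fine V in Ve.
rewrite Ve lee_fin in V0; rewrite -/V Ve -EFinD lee_fin in k0; rewrite Ve.
set SA := \sum_(i < n | K0 <= K i * w i) p i * w i.
have eS : \sum_(i < n) (if K0 <= K i * w i then w i else w i * 0) * p i = SA.
  rewrite /SA [RHS]big_mkcond /=; apply: eq_bigr => i _.
  by case: ifP => _; rewrite ?mulr0 ?mul0r // mulrC.
rewrite eS addr0 in k0.
rewrite lee_fin /explicit_value -/SA -lerBrDl.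
clear hm0 hmc0.
apply: bigmax_le => [|j hj]; first by rewrite subr_ge0.
apply: pp_least; last by lra.
set cj := K0 - K j * w j.
have cj0 : 0 < cj by rewrite /cj; lra.
pose m := fun i => if K0 <= K i * w i then 0 else Num.min 1 (cj / (K0 - K i * w i)).
have hm : forall i, 0 <= m i <= 1.
  move=> i; rewrite /m; case: (lerP K0 (K i * w i)) => hi; first by rewrite lexx ler01.
  rewrite le_min ler01 ge_min lexx /= andbT.
  by rewrite divr_ge0 // ?ltW // subr_gt0.
have hmc : forall i, K i * w i < K0 -> m i * (K0 - K i * w i) <= cj.
  move=> i hi; rewrite /m /= (leNgt K0) hi /=.
  by rewrite -ler_pdivlMr ?subr_gt0 // ge_min lexx orbT.
have k1 := @key_integral R n p K w K0 d T P X m cj hK hw mX hX hint (ltW cj0) hm hmc.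
rewrite -/V Ve -EFinD lee_fin in k1.
have e1 : \sum_(i < n) (if K0 <= K i * w i then w i else w i * m i) * p i =
   SA + \sum_(i < n | K i * w i < K0) p i * w i * Num.min 1 ((K0 - K j * w j) / (K0 - K i * w i)).
  rewrite (bigID (fun i => K0 <= K i * w i)) /=; congr (_ + _).
    by apply: eq_bigr => i hi; rewrite hi mulrC.
  rewrite (eq_bigl (fun i => K i * w i < K0)); last by move=> i; rewrite ltNge.
  apply: eq_bigr => i hi; rewrite (leNgt K0) hi /= /m /= (leNgt K0) hi /= -/cj.
  by rewrite mulrC mulrA.
rewrite e1 in k1; rewrite /cj in k1; rewrite (mulrC (w j)); lra.
Qed.

Definition wn (R : realType) (n : nat) (m : dmeasure R n) (k : nat) : R :=
  if @insub nat (fun k => k < dm_size m)%N _ k is Some i then dm_wt m i else 0.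
Definition ptn (R : realType) (n : nat) (m : dmeasure R n) (k : nat) : 'I_n -> R :=
  if @insub nat (fun k => k < dm_size m)%N _ k is Some i then dm_pt m i else (fun _ => 0).

Lemma wn_ord (R : realType) (n : nat) (m : dmeasure R n) (k : 'I_(dm_size m)) : wn m k = dm_wt m k.
Proof. by rewrite /wn valK. Qed.
Lemma ptn_ord (R : realType) (n : nat) (m : dmeasure R n) (k : 'I_(dm_size m)) : ptn m k = dm_pt m k.
Proof. by rewrite /ptn valK. Qed.

Lemma nat_meas (R : realType) (f : nat -> R) : measurable_fun setT f.
Proof. by []. Qed.

Lemma dm_feasible_value (R : realType) (n : nat) (p K w : 'I_n -> R) (K0 : R) (m : dmeasure R n) :
  dm_feasible p K m -> feasible_values p K w K0 (dm_value w K0 m)%:E.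
Proof.
move=> [hw0 [hw1 [hpt hcon]]].
have wn0 : forall k, 0 <= wn m k.
  by move=> k; rewrite /wn; case: insubP => // i _ _; exact: hw0.
pose mu := msum (fun k => mscale (NngNum (wn0 k)) (\d_k : measure nat R)) (dm_size m).
pose P := mnormalize mu (\d_0%N : probability nat R).
have hint : forall f : nat -> \bar R, (forall x, 0 <= f x)%E ->
   (\int[P]_x f x = \sum_(k < dm_size m) (dm_wt m k)%:E * f k)%E.
  move=> f f0.
  have muT : mu setT = 1%E.
    rewrite /mu /msum /= /mscale /=.
    under eq_bigr do rewrite diracT mule1.
    by rewrite sumEFin -hw1; congr (_%:E); apply: eq_bigr => k _; rewrite wn_ord.
  have Pmu : (P : set nat -> \bar R) = mu.
    have muT2 : mu [set: nat] = 1%E := muT.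
    apply/funext => U; rewrite /P /mnormalize /= -/mu muT2.
    by rewrite onee_eq0 /= invr1 mule1.
  rewrite Pmu /mu ge0_integral_measure_sum //.
  apply: eq_bigr => k _.
  rewrite ge0_integral_mscale // integral_dirac // diracT mul1e /= wn_ord //.
exists default_measure_display, nat, P, (fun i t => ptn m t i).
split; first by move=> i; exact: nat_meas.
split.
  move=> i t; rewrite /ptn; case: insubP => [k _ _|_] //; exact: hpt.
split.
  move=> i; rewrite hint; last by move=> x; rewrite lee_fin pp_ge0.
  rewrite -hcon sumEFin; congr (_%:E); apply: eq_bigr => k _.
  by rewrite ptn_ord.
rewrite hint; last by move=> x; rewrite lee_fin pp_ge0.
rewrite /dm_value sumEFin; congr (_%:E); apply: eq_bigr => k _.
by rewrite ptn_ord.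
Qed.

Definition dm_build (R : realType) (n : nat) (p K : 'I_n -> R) (q : 'I_n -> R) : dmeasure R n :=
  @DMeasure R n n.+1
    (fun k => match unlift ord_max k with Some i => q i | None => 1 - \sum_(i < n) q i end)
    (fun k j => match unlift ord_max k with
                | Some i => if i == j then K j + p j / q j else 0
                | None => 0 end).

Lemma sum_ord_max (R : realType) (n : nat) (F : 'I_n.+1 -> R) :
  \sum_(k < n.+1) F k = \sum_(i < n) F (lift ord_max i) + F ord_max.
Proof.
rewrite big_ord_recr /=; congr (_ + _); apply: eq_bigr => i _.
by congr F; apply: val_inj; rewrite /= /bump leqNgt ltn_ord.
Qed.

Lemma unlift_lm (n : nat) (i : 'I_n) : unlift (@ord_max n) (lift ord_max i) = Some i.
Proof. exact: liftK. Qed.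

Lemma sum_pick (R : realType) (n : nat) (l : 'I_n) (F : 'I_n -> R) :
  \sum_(j < n) (if l == j then F j else 0) = F l.
Proof.
rewrite (bigD1 l) //= eqxx big1 ?addr0 // => j /negbTE hj.
by rewrite eq_sym hj.
Qed.

Lemma pp_mul (R : realType) (q y : R) : 0 <= q -> q * pos_part y = pos_part (q * y).
Proof.
move=> hq; case: (lerP 0 y) => hy.
  by rewrite !pp_id // mulr_ge0.
rewrite (pp_neg (ltW hy)) mulr0 pp_neg //.
by rewrite -(mulr0 q) ler_wpM2l // ltW.
Qed.

Lemma dm_build_feasible (R : realType) (n : nat) (p K : 'I_n -> R) (q : 'I_n -> R) :
  (forall i, 0 <= p i) -> (forall i, 0 < K i) -> (forall i, 0 < q i) -> \sum_(i < n) q i <= 1 ->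
  dm_feasible p K (dm_build p K q).
Proof.
move=> hp hK hq hq1; rewrite /dm_feasible /dm_build /=.
split.
  move=> k; case: (unlift ord_max k) => [i|]; first exact: ltW.
  by rewrite subr_ge0.
split.
  rewrite sum_ord_max /= unlift_none (eq_bigr q); last by move=> i _; rewrite unlift_lm.
  by rewrite addrC subrK.
split.
  move=> k i; case: (unlift ord_max k) => [l|] //; case: eqP => // _.
  by apply: addr_ge0; [exact: ltW | apply: divr_ge0 => //; exact: ltW].
move=> i; rewrite sum_ord_max unlift_none.
rewrite sub0r (@pp_neg _ (- K i)); last by rewrite oppr_le0 ltW.
rewrite mulr0 addr0.
rewrite (eq_bigr (fun l => q l * pos_part ((if l == i then K i + p i / q i else 0) - K i))); last by move=> l _; rewrite unlift_lm.
rewrite (eq_bigr (fun l => if l == i then p i else 0)).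
  rewrite (eq_bigr (fun l => if i == l then p i else 0)); last by move=> l _; rewrite eq_sym.
  exact: (sum_pick i (fun _ => p i)).
move=> l _; case: eqP => [->|_].
  rewrite addrC addKr pp_id; last by apply: divr_ge0 => //; exact: ltW.
  by rewrite mulrC divfK // gt_eqF.
by rewrite sub0r pp_neg ?mulr0 // oppr_le0 ltW.
Qed.

Lemma dm_build_value (R : realType) (n : nat) (p K w : 'I_n -> R) (K0 : R) (q : 'I_n -> R) :
  0 < K0 -> (forall i, 0 < q i) ->
  dm_value w K0 (dm_build p K q) = Hobj p K w K0 q.
Proof.
move=> hK0 hq; rewrite /dm_value /dm_build /= sum_ord_max unlift_none.
rewrite [X in _ + _ * pos_part (X - _)]big1; last by move=> j _; rewrite mulr0.
rewrite sub0r (@pp_neg _ (- K0)); last by rewrite oppr_le0 ltW.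
rewrite mulr0 addr0.
rewrite /Hobj; apply: eq_bigr => l _; rewrite unlift_lm.
rewrite (eq_bigr (fun j => if l == j then w j * (K j + p j / q j) else 0)); last first.
  by move=> j _; case: eqP => _; rewrite ?mulr0.
rewrite sum_pick pp_mul; last exact: ltW.
congr pos_part; have := hq l => hql.
by field; rewrite gt_eqF.
Qed.

Definition hk (R : realType) (k : nat) : R := (k.+1%:R)^-1.

Definition qseq (R : realType) (n : nat) (nu : 'I_n -> R) (k : nat) : 'I_n -> R :=
  fun i => (1 - hk R k) * nu i + hk R k / n%:R.

Lemma harm_01 (R : realType) (k : nat) : 0 < (hk R k : R) <= 1.
Proof.
rewrite /hk invr_gt0 ltr0n /= invf_le1 ?ltr0n //.
by rewrite ler1n.
Qed.

Lemma qseq_pos (R : realType) (n : nat) (nu : 'I_n -> R) k i :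
  (forall i, 0 <= nu i) -> 0 < qseq nu k i.
Proof.
move=> h; have /andP[h0 h1] := harm_01 R k.
rewrite /qseq; apply: ltr_wpDl.
  by apply: mulr_ge0 => //; rewrite subr_ge0.
by apply: divr_gt0 => //; rewrite ltr0n; exact: (leq_ltn_trans (leq0n _) (ltn_ord i)).
Qed.

Lemma qseq_sum (R : realType) (n : nat) (nu : 'I_n -> R) k :
  (forall i, 0 <= nu i) -> \sum_(i < n) nu i <= 1 -> \sum_(i < n) qseq nu k i <= 1.
Proof.
move=> h hs; have /andP[h0 h1] := harm_01 R k.
rewrite /qseq big_split /= -mulr_sumr sumr_const card_ord.
have e : (hk R k / n%:R) *+ n <= hk R k.
  case: n {nu h hs} => [|n]; first by rewrite mulr0n ltW.
  by rewrite -mulr_natr divfK ?pnatr_eq0.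
have : (1 - hk R k) * \sum_(i < n) nu i <= (1 - hk R k) * 1.
  by apply: ler_wpM2l => //; rewrite subr_ge0.
lra.
Qed.

Lemma lip_aux (R : realType) (a x y c : R) : `|(a - x * c) - (a - y * c)| <= `|x - y| * `|c|.
Proof.
have -> : (a - x * c) - (a - y * c) = (y - x) * c by ring.
by rewrite normrM distrC.
Qed.

Lemma Hobj_lip (R : realType) (n : nat) (p K w : 'I_n -> R) (K0 : R) (q nu : 'I_n -> R) :
  `|Hobj p K w K0 q - Hobj p K w K0 nu| <= \sum_(i < n) `|q i - nu i| * `|K0 - w i * K i|.
Proof.
rewrite /Hobj -sumrB; apply: le_trans (ler_norm_sum _ _ _) _.
apply: ler_sum => i _; apply: le_trans (pp_lip _ _) _.
exact: lip_aux.
Qed.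

Lemma Hobj_conv (R : realType) (n : nat) (p K w : 'I_n -> R) (K0 : R) (nu : 'I_n -> R) :
  Hobj p K w K0 (qseq nu k) @[k --> \oo] --> Hobj p K w K0 nu.
Proof.
pose C := \sum_(i < n) `|n%:R^-1 - nu i| * `|K0 - w i * K i|.
have hb : forall k, `|Hobj p K w K0 (qseq nu k) - Hobj p K w K0 nu| <= hk R k * C.
  move=> k; apply: le_trans (Hobj_lip _ _ _ _ _ _) _.
  rewrite /C mulr_sumr; apply: ler_sum => i _.
  have /andP[h0 h1] := harm_01 R k.
  have -> : qseq nu k i - nu i = hk R k * (n%:R^-1 - nu i) by rewrite /qseq; ring.
  by rewrite normrM (ger0_norm (ltW h0)) mulrA.
have hh : (fun k => hk R k) @ \oo --> (0 : R) by exact: cvg_harmonic.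
have hC : (fun k => hk R k * C) @ \oo --> (0 : R).
  rewrite -(mul0r C); apply: cvgM => //; exact: cvg_cst.
apply: (@squeeze_cvgr _ _ _ _ (fun k => Hobj p K w K0 nu - hk R k * C)
                              (fun k => Hobj p K w K0 nu + hk R k * C)).
- apply: nearW => k; have := hb k; rewrite ler_distl.
  by [].
- rewrite -[X in _ --> X]subr0; apply: cvgB => //; exact: cvg_cst.
- rewrite -[X in _ --> X]addr0; apply: cvgD => //; exact: cvg_cst.
Qed.

Theorem mainTheorem4 (R : realType) (n : nat) (p K w : 'I_n -> R) (K0 : R) :
  (forall i, 0 <= p i) -> (forall i, 0 < K i) -> (forall i, 0 < w i) -> 0 < K0 ->
  [/\ pinf p K w K0 = (dual_inf p K w K0)%:E,
      dual_inf p K w K0 = explicit_value p K w K0 &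
      exists ms : nat -> dmeasure R n,
        (forall k, dm_feasible p K (ms k)) /\
        (fun k => (dm_value w K0 (ms k))%:E) @ \oo --> pinf p K w K0].
Proof.
move=> hp hK hw hK0.
have hD := dual_eq hp hK hw hK0.
have [nu [hnu0 hnuS hnu1 hH]] := primal_nu hp hK hw hK0.
set E := explicit_value p K w K0 in hD hH *.
pose ms := fun k => dm_build p K (qseq nu k).
have hfeas : forall k, dm_feasible p K (ms k).
  move=> k; apply: dm_build_feasible => //; first by move=> i; exact: qseq_pos.
  exact: qseq_sum.
have hval : forall k, dm_value w K0 (ms k) = Hobj p K w K0 (qseq nu k).
  by move=> k; apply: dm_build_value => // i; exact: qseq_pos.
have hconv := @Hobj_conv R n p K w K0 nu.
have lb : ((E)%:E <= pinf p K w K0)%E.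
  by apply/ereal_infP => v hv; exact: feasible_ge.
have ub : forall k, (pinf p K w K0 <= (Hobj p K w K0 (qseq nu k))%:E)%E.
  by move=> k; apply: ereal_inf_lbound; rewrite -hval; exact: dm_feasible_value.
have hEu : forall k, E <= Hobj p K w K0 (qseq nu k).
  by move=> k; rewrite -lee_fin; exact: le_trans lb (ub k).
have hHE : Hobj p K w K0 nu = E.
  apply/eqP; rewrite eq_le hH /=.
  have := @closed_cvg _ _ _ _ (fun k => Hobj p K w K0 (qseq nu k)) [set x | E <= x]
    (@closed_ge _ E) _ _ hconv.
  move=> h.
  have hn : \forall k \near \oo, [set x | E <= x] (Hobj p K w K0 (qseq nu k)).
    by apply: nearW => k; exact: hEu k.
  exact (h eventually_filter hn).
have hpinf : pinf p K w K0 = E%:E.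
  have hfin : pinf p K w K0 = (fine (pinf p K w K0))%:E.
    rewrite fineK // fin_numE; apply/andP; split.
      by apply/negP => /eqP h; move: lb; rewrite h leeNy_eq.
    by apply/negP => /eqP h; move: (ub 0%N); rewrite h leye_eq.
  rewrite hfin; congr (_%:E); apply/eqP; rewrite eq_le.
  rewrite hfin lee_fin in lb; rewrite lb andbT -hHE.
  have ub' : forall k, fine (pinf p K w K0) <= Hobj p K w K0 (qseq nu k).
    by move=> k; rewrite -lee_fin -hfin; exact: ub.
  have := @closed_cvg _ _ _ _ (fun k => Hobj p K w K0 (qseq nu k))
    [set x | fine (pinf p K w K0) <= x] (@closed_ge _ _) _ _ hconv.
  move=> h.
  have hn : \forall k \near \oo, [set x | fine (pinf p K w K0) <= x] (Hobj p K w K0 (qseq nu k)).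
    by apply: nearW => k; exact: ub' k.
  exact (h eventually_filter hn).
split => //; first by rewrite hpinf hD.
exists ms; split => //.
rewrite hpinf; under eq_fun do rewrite hval.
rewrite -hHE.
by apply: cvg_comp hconv _; exact: cvg_id.
Qed.
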